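(* Let $A=(a_i^j)$ and $B=(b_i^j)$ be $n\times n$ matrices with all entries in $\{0,1\}$, such that for some $r\in\{1,\dots,n-1\}$, $a_i^j=b_i^j=0$ whenever $j-i\ne r$. Let $\xi>0$. If there exists an invertible matrix $C$ with $\|C\|,\|C^{-1}\|\le\xi$ and $\|AC-CB\|=\varepsilon<\frac{1}{n!\,\xi^n}$, then $\mathrm{rank}\,A=\mathrm{rank}\,B$.
   Context: $\|\cdot\|$ is the operator norm on $n\times n$ complex matrices; $a_i^j$ is the entry in row $i$, column $j$. *)

(* Defs.v *)
From HB Require Import structures.
From mathcomp Require Import all_boot all_order all_algebra.
From mathcomp Require Import complex.
From mathcomp Require Import classical_sets reals.
Set Implicit Arguments. Unset Strict Implicit. Unset Printing Implicit Defensive.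
Import Order.TTheory GRing.Theory Num.Theory.
Local Open Scope ring_scope.
Local Open Scope classical_set_scope.

Definition vnorm (R : realType) (n : nat) (x : 'cV[R[i]]_n) : R :=
  Num.sqrt (\sum_(i < n) ((complex.Re (x i 0)) ^+ 2 + (complex.Im (x i 0)) ^+ 2)).

Definition opnorm (R : realType) (n : nat) (M : 'M[R[i]]_n) : R :=
  sup [set vnorm (M *m x) | x in [set x : 'cV[R[i]]_n | vnorm x <= 1]].

(* Main.v *)
Require Import Defs.
From HB Require Import structures.
From mathcomp Require Import all_boot all_order all_algebra.
From mathcomp Require Import complex.
From mathcomp Require Import classical_sets reals.
From mathcomp Require Import ring lra zify.
Set Implicit Arguments. Unset Strict Implicit. Unset Printing Implicit Defensive.
Import Order.TTheory GRing.Theory Num.Theory.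
Local Open Scope ring_scope.
Local Open Scope complex_scope.

Section S.
Variable R : realType.
Implicit Types (z : R[i]).
Local Notation Re := complex.Re.
Local Notation Im := complex.Im.

Definition sq z : R := Re z ^+ 2 + Im z ^+ 2.
Definition nn n (x : 'cV[R[i]]_n) : R := \sum_(i < n) sq (x i 0).

Lemma sq_ge0 z : 0 <= sq z.
Proof. rewrite /sq; apply: addr_ge0; exact: sqr_ge0. Qed.

Lemma sqC z : (sq z)%:C = conjc z * z.
Proof. case: z => a b; rewrite /sq /=. apply/eqP; rewrite eq_complex /=; apply/andP; split; apply/eqP; ring. Qed.

Lemma nnC n (x : 'cV[R[i]]_n) : (nn x)%:C = ((map_mx conjc x)^T *m x) 0 0.
Proof.
rewrite /nn mxE rmorph_sum /=; apply: eq_bigr => i _; by rewrite sqC !mxE.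
Qed.

Lemma vnormE n (x : 'cV[R[i]]_n) : vnorm x = Num.sqrt (nn x).
Proof. by []. Qed.

Lemma nn_ge0 n (x : 'cV[R[i]]_n) : 0 <= nn x.
Proof. apply: sumr_ge0 => i _; exact: sq_ge0. Qed.

Lemma sqZ (a : R) z : sq (a%:C * z) = a ^+ 2 * sq z.
Proof. case: z => u v; rewrite /sq /=; ring. Qed.

Lemma sqN z : sq (- z) = sq z.
Proof. case: z => u v; rewrite /sq /=; ring. Qed.

Lemma vnormZ n (a : R) (x : 'cV[R[i]]_n) : vnorm (a%:C *: x) = `|a| * vnorm x.
Proof.
rewrite !vnormE /nn.
under eq_bigr => i _ do rewrite mxE sqZ.
by rewrite -mulr_sumr sqrtrM ?sqr_ge0 // sqrtr_sqr.
Qed.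

Lemma vnormN n (x : 'cV[R[i]]_n) : vnorm (- x) = vnorm x.
Proof.
rewrite !vnormE /nn.
by under eq_bigr => i _ do rewrite mxE sqN.
Qed.

Lemma vnorm_ge0 n (x : 'cV[R[i]]_n) : 0 <= vnorm x.
Proof. exact: sqrtr_ge0. Qed.

Lemma sq_eq0 z : sq z = 0 -> z = 0.
Proof.
case: z => a b; rewrite /sq /= => h.
have ha : a ^+ 2 = 0 by apply/eqP; rewrite eq_le sqr_ge0 andbT -h lerDl sqr_ge0.
have hb : b ^+ 2 = 0 by move: h; rewrite ha add0r.
move/eqP: ha; rewrite sqrf_eq0 => /eqP ->; move/eqP: hb; rewrite sqrf_eq0 => /eqP ->.
by [].
Qed.

Lemma vnorm_gt0 n (x : 'cV[R[i]]_n) : x != 0 -> 0 < vnorm x.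
Proof.
move=> nz; rewrite vnormE sqrtr_gt0 lt_def nn_ge0 andbT.
apply: contra nz => /eqP /psumr_eq0P h.
apply/eqP/matrixP => i j; rewrite (ord1 j) mxE; apply: sq_eq0; apply: h => // k _; exact: sq_ge0.
Qed.

Definition md z : R := Num.sqrt (sq z).

Lemma normE z : `|z| = (md z)%:C.
Proof. by rewrite normc_def. Qed.

Lemma md_ge0 z : 0 <= md z.
Proof. exact: sqrtr_ge0. Qed.

Lemma sq_md z : sq z = md z ^+ 2.
Proof. by rewrite sqr_sqrtr // sq_ge0. Qed.

Lemma md_sum (I : finType) (f : I -> R[i]) : md (\sum_i f i) <= \sum_i md (f i).
Proof.
rewrite -lecR -normE rmorph_sum /=.
have -> : \sum_i (md (f i))%:C = \sum_i `|f i| by apply: eq_bigr => i _; rewrite normE.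
exact: ler_norm_sum.
Qed.

Lemma mdM z w : md (z * w) = md z * md w.
Proof. by apply: complexI; rewrite rmorphM /= -!normE normrM. Qed.

Lemma md_le1 n (x : 'cV[R[i]]_n) j : nn x <= 1 -> md (x j 0) <= 1.
Proof.
move=> h; rewrite /md -sqrtr1 ler_sqrt // (le_trans _ h) //.
rewrite /nn (bigD1 j) //= lerDl; apply: sumr_ge0 => k _; exact: sq_ge0.
Qed.

Lemma nn_bound n (M : 'M[R[i]]_n) (x : 'cV[R[i]]_n) : nn x <= 1 ->
  nn (M *m x) <= \sum_(i < n) (\sum_(j < n) md (M i j)) ^+ 2.
Proof.
move=> h; rewrite /nn; apply: ler_sum => i _.
rewrite sq_md; apply: lerXn2r; rewrite ?nnegrE ?md_ge0 //.
  by apply: sumr_ge0 => k _; exact: md_ge0.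
rewrite mxE (le_trans (md_sum _)) //; apply: ler_sum => j _.
by rewrite mdM ler_piMr ?md_ge0 ?md_le1.
Qed.

Local Open Scope classical_set_scope.
Definition nset n (M : 'M[R[i]]_n) := [set vnorm (M *m x) | x in [set x : 'cV[R[i]]_n | vnorm x <= 1]].

Lemma nset_ub n (M : 'M[R[i]]_n) : has_ubound (nset M).
Proof.
exists (Num.sqrt (\sum_(i < n) (\sum_(j < n) md (M i j)) ^+ 2)).
move=> y [x hx <-]; rewrite /vnorm ler_sqrt; last first.
  by apply: sumr_ge0 => i _; exact: sqr_ge0.
apply: nn_bound; move: hx; rewrite /= /vnorm -{1}sqrtr1 ler_sqrt //.
Qed.

Lemma opnorm_ge n (M : 'M[R[i]]_n) (x : 'cV[R[i]]_n) :
  vnorm (M *m x) <= opnorm M * vnorm x.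
Proof.
have ub := ub_le_sup (nset_ub M).
have [->|nz] := eqVneq x 0.
  rewrite mulmx0 /vnorm /nn big1 ?sqrtr0 ?mulr0 // => i _.
  by rewrite !mxE /sq /= expr0n /= addr0.
have hp := vnorm_gt0 nz.
set s := vnorm x.
have h1 : vnorm ((s^-1)%:C *: x) <= 1.
  by rewrite vnormZ ger0_norm ?invr_ge0 ?(ltW hp) // mulVf // lt0r_neq0.
have h2 : vnorm (M *m ((s^-1)%:C *: x)) <= opnorm M by apply: ub; exists ((s^-1)%:C *: x).
move: h2; rewrite -scalemxAr vnormZ ger0_norm; last by rewrite invr_ge0 ltW.
by rewrite ler_pdivrMl // mulrC.
Qed.

Lemma opnorm_ge0 n (M : 'M[R[i]]_n) : 0 <= opnorm M.
Proof.
have ub := ub_le_sup (nset_ub M).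
have h1 : vnorm (0 : 'cV[R[i]]_n) <= 1.
  rewrite /vnorm /nn big1 ?sqrtr0 // => i _.
  by rewrite !mxE /sq /= expr0n /= addr0.
have : vnorm (M *m 0) <= opnorm M by apply: ub; exists 0.
rewrite mulmx0 /vnorm /nn big1 ?sqrtr0 // => i _.
by rewrite !mxE /sq /= expr0n /= addr0.
Qed.

Lemma int_aux (i j k : nat) (r : nat) : (j%:Z - i%:Z = r%:Z)%R -> (k%:Z - i%:Z = r%:Z)%R -> j = k.
Proof. move=> h1 h2. lia. Qed.
Lemma int_aux2 (i j k : nat) (r : nat) : (j%:Z - i%:Z = r%:Z)%R -> (j%:Z - k%:Z = r%:Z)%R -> i = k.
Proof. move=> h1 h2. lia. Qed.
Section Key.
Variables (n r : nat) (A D : 'M[R[i]]_n).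
Hypothesis A01 : forall i j, A i j = 0 \/ A i j = 1.
Hypothesis Asupp : forall i j : 'I_n, A i j != 0 -> (j%:Z - i%:Z = r%:Z)%R.

Definition cind (j : 'I_n) : R[i] := if [exists i, A i j == 1] then 1 else 0.
Definition J : 'M[R[i]]_n := diag_mx (\row_j cind j).

Lemma AJ : A *m J = A.
Proof.
apply/matrixP => i j; rewrite mul_mx_diag !mxE /cind.
case: (A01 i j) => hij; rewrite hij; first by rewrite mul0r.
by case: existsP => [_|hn]; [rewrite mulr1 | case: hn; exists i; rewrite hij].
Qed.

Lemma JJ : J *m J = J.
Proof.
apply/matrixP => i j; rewrite mul_mx_diag !mxE.
case: eqP => [->|_]; rewrite ?mulr0n ?mul0r // mulr1n /cind.
by case: ifP; rewrite ?mulr1 ?mulr0.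
Qed.

Lemma JT : J^T = J.
Proof. by rewrite /J tr_diag_mx. Qed.

Lemma ATA : A^T *m A = J.
Proof.
apply/matrixP => j k; rewrite !mxE /cind.
under eq_bigr => i _ do rewrite mxE.
have [<-|njk] := eqVneq j k.
  case: existsP => [[i0 /eqP h0]|hn].
    rewrite (bigD1 i0) //= big1 ?h0 ?mulr1 ?addr0 // => i hi.
    case: (A01 i j) => hij; first by rewrite hij mul0r.
    have e := int_aux2 (Asupp (i:=i) (j:=j) _) (Asupp (i:=i0) (j:=j) _).
    by case/negP: hi; apply/eqP/val_inj; apply: e; rewrite ?hij ?h0 oner_neq0.
  rewrite big1 // => i _; case: (A01 i j) => hij; first by rewrite hij mul0r.
  by case: hn; exists i; rewrite hij.
rewrite big1 // => i _.
case: (A01 i j) => hij; first by rewrite hij mul0r.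
case: (A01 i k) => hik; first by rewrite hik mulr0.
have e := int_aux (Asupp (i:=i) (j:=j) _) (Asupp (i:=i) (j:=k) _).
move: njk; rewrite hij hik oner_neq0 in e.
by have := e isT isT => e' /negP; case; apply/eqP/val_inj.
Qed.

Lemma conjA : map_mx conjc A = A.
Proof. by apply/matrixP => i j; rewrite mxE; case: (A01 i j) => ->; rewrite ?conjc0 ?conjc1. Qed.

Lemma normA (x : 'cV[R[i]]_n) : J *m x = x -> vnorm (A *m x) = vnorm x.
Proof.
move=> hx; rewrite !vnormE; congr Num.sqrt; apply: complexI; rewrite !nnC.
rewrite map_mxM conjA trmx_mul -mulmxA (mulmxA (A^T)) ATA.
by rewrite hx.
Qed.

Lemma key : (\rank D < \rank A)%N ->
  exists x : 'cV[R[i]]_n, [/\ x != 0, D *m x = 0 & vnorm (A *m x) = vnorm x].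
Proof.
move=> hr.
set M := J *m D^T.
set K := kermx M.
have rM : (\rank M <= \rank D)%N by rewrite (leq_trans (mxrankM_maxr _ _)) // mxrank_tr.
have rJ : (\rank A <= \rank J)%N by rewrite -{1}AJ mxrankM_maxr.
have rJn : (\rank J <= n)%N by exact: rank_leq_row.
have : K *m J != 0.
  apply/negP => /eqP h.
  have : (K <= kermx J)%MS by rewrite sub_kermx h.
  move/mxrankS; rewrite !mxrank_ker => h2.
  lia.
case/boolP: [exists i, exists j, (K *m J) i j != 0] => [/existsP [i /existsP [j hij]] _|hn].
  set v := row i (K *m J).
  exists v^T; split.
  - apply/eqP => h; move: hij; have : v^T j 0 = 0 by rewrite h mxE.
    by rewrite mxE mxE => ->; rewrite eqxx.
  - apply: trmx_inj; rewrite trmx_mul trmxK trmx0 /v -row_mul -mulmxA.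
    by rewrite mulmx_ker row0.
  - apply: normA; apply: trmx_inj; rewrite trmx_mul trmxK JT /v -row_mul -mulmxA JJ.
    by [].
move=> nz; case/negP: nz; apply/eqP/matrixP => i j.
have -> : (0 : 'M[R[i]]_n) i j = 0 by rewrite mxE.
apply/eqP; apply: contraNT hn => h; apply/existsP; exists i; apply/existsP; exists j.
exact: h.
Qed.

End Key.
End S.

Lemma opb (R : realType) n (M : 'M[R[i]]_n) (x : 'cV[R[i]]_n) k :
  opnorm M <= k -> vnorm (M *m x) <= k * vnorm x.
Proof. move=> h; exact: le_trans (opnorm_ge _ _) (ler_wpM2r (vnorm_ge0 _) h). Qed.

Unset Implicit Arguments.
Set Strict Implicit.
Local Close Scope complex_scope.

Theorem lemma22 (R : realType) (n r : nat) (A B C : 'M[R[i]]_n) (xi eps : R) :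
  (forall i j, A i j = 0 \/ A i j = 1) ->
  (forall i j, B i j = 0 \/ B i j = 1) ->
  (1 <= r < n)%N ->
  (forall i j : 'I_n, (j%:Z - i%:Z != r%:Z)%R -> A i j = 0 /\ B i j = 0) ->
  0 < xi ->
  C \in unitmx ->
  opnorm C <= xi ->
  opnorm (invmx C) <= xi ->
  opnorm (A *m C - C *m B) = eps ->
  eps < 1 / ((n`!)%:R * xi ^+ n) ->
  \rank A = \rank B.
Proof.
move=> hA hB hr hsupp hxi hC hCn hCin hE heps.
set E := A *m C - C *m B in hE.
have eps0 : 0 <= eps by rewrite -hE opnorm_ge0.
have sA : forall i j : 'I_n, A i j != 0 -> (j%:Z - i%:Z = r%:Z)%R.
  move=> i j nz; case: (boolP (j%:Z - i%:Z == r%:Z)%R) => [/eqP//|h].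
  by rewrite (proj1 (hsupp _ _ h)) eqxx in nz.
have sB : forall i j : 'I_n, B i j != 0 -> (j%:Z - i%:Z = r%:Z)%R.
  move=> i j nz; case: (boolP (j%:Z - i%:Z == r%:Z)%R) => [/eqP//|h].
  by rewrite (proj2 (hsupp _ _ h)) eqxx in nz.
have n0 : (0 < n)%N by lia.
have xi1 : 1 <= xi.
  pose i0 : 'I_n := Ordinal n0.
  pose x0 : 'cV[R[i]]_n := const_mx 1.
  have nz : x0 != 0 by apply/eqP => /matrixP/(_ i0 0); rewrite !mxE => /eqP; rewrite oner_eq0.
  have p := vnorm_gt0 nz.
  have e : x0 = C *m (invmx C *m x0) by rewrite mulmxA mulmxV // mul1mx.
  have h1 := opb (invmx C *m x0) hCn.
  have h2 := opb x0 hCin.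
  rewrite -e in h1.
  have : 1 <= xi * xi.
    have h3 : vnorm x0 <= xi * xi * vnorm x0.
      by rewrite (le_trans h1) // -mulrA ler_wpM2l // ltW.
    by rewrite -(ler_pM2r p) mul1r.
  nra.
have epsxi : eps * xi < 1.
  have P1 : xi <= (n`!)%:R * xi ^+ n.
    have f1 : 1 <= (n`!)%:R :> R by rewrite ler1n fact_gt0.
    have f2 : xi <= xi ^+ n.
      by rewrite -(subnK n0) exprD expr1 ler_peMl ?exprn_ege1 // (le_trans _ xi1).
    nra.
  have Pp : 0 < (n`!)%:R * xi ^+ n by apply: lt_le_trans P1.
  move: heps; rewrite ltr_pdivlMr // => h.
  nra.
suff : forall x : 'cV[R[i]]_n, x != 0 -> vnorm x <= eps * xi * vnorm x -> False.
  move=> contra.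
  case: (ltngtP (\rank A) (\rank B)) => // hlt.
  - have hD : (\rank (invmx C *m A *m C) < \rank B)%N.
      by rewrite (leq_ltn_trans (mxrankM_maxl _ _)) // (leq_ltn_trans (mxrankM_maxr _ _)).
    have [x [nz hDx hn]] := key hB sB hD.
    exfalso; apply: (contra x nz).
    have hCB : C *m B = A *m C - E by rewrite /E opprB addrC subrK.
    have hBx : B *m x = - (invmx C *m (E *m x)).
      rewrite -[B]mul1mx -(mulVmx hC) -!mulmxA (mulmxA C) hCB mulmxBl mulmxBr !mulmxA hDx sub0r.
      by [].
    rewrite -{1}hn hBx vnormN (le_trans (opb _ hCin)) // (mulrC eps) -mulrA ler_wpM2l ?(le_trans _ xi1) //.
    by rewrite -hE; apply: opb.
  - have hD : (\rank (B *m invmx C) < \rank A)%N.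
      by rewrite (leq_ltn_trans (mxrankM_maxl _ _)).
    have [x [nz hDx hn]] := key hA sA hD.
    exfalso; apply: (contra x nz).
    have hAC : A *m C = C *m B + E by rewrite /E addrC subrK.
    have hAx : A *m x = E *m (invmx C *m x).
      rewrite -[x in A *m x]mul1mx -(mulmxV hC) -mulmxA mulmxA hAC mulmxDl -!mulmxA (mulmxA B) hDx mulmx0 add0r.
      by [].
    rewrite -{1}hn hAx -mulrA (le_trans (opb _ (le_refl _))) // hE ler_wpM2l //.
    exact: opb.
move=> x nz h; have p := vnorm_gt0 nz.
move: h; rewrite -{1}(mul1r (vnorm x)) ler_pM2r // => h.
nra.
Qed.
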